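(* Consider a one-parameter quantum channel on $\mathbb{C}^d$ with a fixed pure input state $\rho_0=|\psi_0\rangle\langle\psi_0|$, canonical Kraus operators $\Upsilon_k(\theta)$, output state $\rho_{out}(\theta)$, SLD quantum information $H(\theta)$ of the family $\rho_{out}(\theta)$, and Sarovar–Milburn bound $C_\Upsilon(\theta)=4\sum_k \mathrm{tr}\{\Upsilon_k'(\theta)\rho_0\Upsilon_k'(\theta)^\dagger\}$ (all as defined in the context). Then $H(\theta)\le C_\Upsilon(\theta)$.
   Context: A one-parameter quantum channel is a map $\rho_0\mapsto\sum_k E_k(\theta)\rho_0E_k(\theta)^\dagger$ on density matrices on $\mathbb{C}^d$, with Kraus operators $E_k(\theta)$ depending differentiably on a real parameter $\theta$ and $\sum_k E_k(\theta)^\dagger E_k(\theta)=I$. The input state is a fixed, completely known pure state $\rho_0=|\psi_0\rangle\langle\psi_0|$. The canonical Kraus operators $\{\Upsilon_k(\theta)\}_{k=1}^d$ form a (differentiable) Kraus representation of the same channel satisfying $\mathrm{tr}\{\Upsilon_k(\theta)\rho_0\Upsilon_j(\theta)^\dagger\}=\delta_{jk}p_k(\theta)$ for all $j,k$. The output state is then $\rho_{out}(\theta)=\sum_k p_k(\theta)|w_k(\theta)\rangle\langle w_k(\theta)|$, where $\{|w_k(\theta)\rangle\}_{k=1}^d$ is an orthonormal basis depending differentiably on $\theta$ with $|w_k\rangle=p_k^{-1/2}\Upsilon_k|\psi_0\rangle$ whenever $p_k>0$. A prime denotes $d/d\theta$. The SLD quantum information is $H(\theta)=\mathrm{tr}\{\rho_{out}(\theta)\lambda(\theta)^2\}$,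 where $\lambda(\theta)$ is a self-adjoint solution of $\frac{d\rho_{out}}{d\theta}=\frac12(\rho_{out}\lambda+\lambda\rho_{out})$. *)

(* Defs.v *)
From HB Require Import structures.
From mathcomp Require Import all_boot all_order all_algebra.
From mathcomp Require Import complex.
From mathcomp Require Import all_classical all_reals.
From mathcomp Require Import topology normedtype derive.
Set Implicit Arguments. Unset Strict Implicit. Unset Printing Implicit Defensive.
Import Order.TTheory GRing.Theory Num.Theory.
Import numFieldNormedType.Exports.
Local Open Scope ring_scope.

Definition adj (R : rcfType) m n (A : 'M[R[i]]_(m, n)) : 'M[R[i]]_(n, m) :=
  (map_mx (@conjc R) A)^T.

Definition mx_derivable (R : realType) m n (M : R -> 'M[R[i]]_(m, n)) (t : R) :=
  forall i j, derivable (fun s : R => complex.Re (M s i j)) t 1 /\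
              derivable (fun s : R => complex.Im (M s i j)) t 1.

Definition mx_deriv (R : realType) m n (M : R -> 'M[R[i]]_(m, n)) (t : R)
  : 'M[R[i]]_(m, n) :=
  \matrix_(i, j) Complex (derive1 (fun s : R => complex.Re (M s i j)) t)
                         (derive1 (fun s : R => complex.Im (M s i j)) t).

(* Main.v *)
Require Import Defs.
From HB Require Import structures.
From mathcomp Require Import all_boot all_order all_algebra.
From mathcomp Require Import complex.
From mathcomp Require Import all_classical all_reals.
From mathcomp Require Import topology normedtype derive.
From mathcomp Require Import ring.
Import Order.TTheory GRing.Theory Num.Theory.
Import numFieldNormedType.Exports.
Local Open Scope ring_scope.
Set Implicit Arguments. Unset Strict Implicit.

Section CD.
Variable R : realType.
Local Notation C := R[i].

Lemma RD_add (u v : R -> R) t a b : is_derive t (1:R) u a -> is_derive t (1:R) v b ->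
  is_derive t (1:R) (fun s => u s + v s) (a + b).
Proof. move=> h1 h2; exact: is_deriveD. Qed.
Lemma RD_opp (u : R -> R) t a : is_derive t (1:R) u a ->
  is_derive t (1:R) (fun s => - u s) (- a).
Proof. move=> h1; exact: is_deriveN. Qed.
Lemma RD_mul (u v : R -> R) t a b : is_derive t (1:R) u a -> is_derive t (1:R) v b ->
  is_derive t (1:R) (fun s => u s * v s) (u t * b + v t * a).
Proof. move=> h1 h2; exact: is_deriveM. Qed.
Lemma RD_cst (c : R) t : is_derive t (1:R) (fun _ => c) 0.
Proof. exact: is_derive_cst. Qed.

Definition CD (f : R -> C) (t : R) (z : C) :=
  is_derive t (1:R) (fun s => complex.Re (f s)) (complex.Re z) /\
  is_derive t (1:R) (fun s => complex.Im (f s)) (complex.Im z).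
Local Notation Re := complex.Re.
Local Notation Im := complex.Im.

Lemma ReD (x y : C) : Re (x + y) = Re x + Re y. Proof. by case: x; case: y. Qed.
Lemma ImD (x y : C) : Im (x + y) = Im x + Im y. Proof. by case: x; case: y. Qed.
Lemma ReM (x y : C) : Re (x * y) = Re x * Re y - Im x * Im y. Proof. by case: x; case: y. Qed.
Lemma ImM (x y : C) : Im (x * y) = Re x * Im y + Im x * Re y. Proof. by case: x; case: y. Qed.
Lemma ReJ (x : C) : Re (conjc x) = Re x. Proof. by case: x. Qed.
Lemma ImJ (x : C) : Im (conjc x) = - Im x. Proof. by case: x. Qed.
Lemma Re0 : Re (0 : C) = 0. Proof. by []. Qed.
Lemma Im0 : Im (0 : C) = 0. Proof. by []. Qed.

Lemma CD_eq f t a b : CD f t a -> a = b -> CD f t b.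
Proof. by move=> h <-. Qed.

Lemma CD_cst (c : C) t : CD (fun _ => c) t 0.
Proof. split; exact: RD_cst. Qed.

Lemma CD_add f g t a b : CD f t a -> CD g t b -> CD (fun s => f s + g s) t (a + b).
Proof.
move=> [h1 h2] [h3 h4]; split.
  have -> : (fun s => Re (f s + g s)) = (fun s => Re (f s) + Re (g s)).
    by apply/funext=> s; rewrite ReD.
  by rewrite ReD; apply: RD_add.
have -> : (fun s => Im (f s + g s)) = (fun s => Im (f s) + Im (g s)).
  by apply/funext=> s; rewrite ImD.
by rewrite ImD; apply: RD_add.
Qed.

Lemma CD_mul f g t a b : CD f t a -> CD g t b ->
  CD (fun s => f s * g s) t (f t * b + a * g t).
Proof.
move=> [h1 h2] [h3 h4]; split.
  have -> : (fun s => Re (f s * g s)) =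
     (fun s => Re (f s) * Re (g s) + - (Im (f s) * Im (g s))).
    by apply/funext=> s; rewrite ReM.
  have := RD_add (RD_mul h1 h3) (RD_opp (RD_mul h2 h4)).
  move/is_derive_eq; apply.
  rewrite ReD !ReM; ring.
have -> : (fun s => Im (f s * g s)) =
   (fun s => Re (f s) * Im (g s) + Im (f s) * Re (g s)).
  by apply/funext=> s; rewrite ImM.
have := RD_add (RD_mul h1 h4) (RD_mul h2 h3).
move/is_derive_eq; apply.
rewrite ImD !ImM; ring.
Qed.

Lemma CD_conj f t a : CD f t a -> CD (fun s => conjc (f s)) t (conjc a).
Proof.
move=> [h1 h2]; split.
  have -> : (fun s => Re (conjc (f s))) = (fun s => Re (f s)).
    by apply/funext=> s; rewrite ReJ.
  by rewrite ReJ.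
have -> : (fun s => Im (conjc (f s))) = (fun s => - Im (f s)).
  by apply/funext=> s; rewrite ImJ.
by rewrite ImJ; apply: RD_opp.
Qed.

Lemma CD_sum m (F : 'I_m -> R -> C) D t : (forall k, CD (F k) t (D k)) ->
  CD (fun s => \sum_k F k s) t (\sum_k D k).
Proof.
elim: m F D => [|m IH] F D H.
  have -> : (fun s => \sum_(k < 0) F k s) = (fun _ => 0).
    by apply/funext=> s; rewrite big_ord0.
  by rewrite big_ord0; apply: CD_cst.
have -> : (fun s => \sum_(k < m.+1) F k s) =
   (fun s => \sum_(k < m) F (widen_ord (leqnSn m) k) s + F ord_max s).
  by apply/funext=> s; rewrite big_ord_recr.
rewrite big_ord_recr; apply: CD_add => //.
exact: (IH (fun k => F (widen_ord (leqnSn m) k))).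
Qed.
End CD.
Section MD.
Variable R : realType.
Local Notation C := R[i].
Local Notation Re := complex.Re.
Local Notation Im := complex.Im.

Definition MD m n (M : R -> 'M[C]_(m, n)) t (D : 'M[C]_(m, n)) :=
  forall i j, CD (fun s => M s i j) t (D i j).

Lemma MD_eq m n (M : R -> 'M[C]_(m, n)) t D D' : MD M t D -> D = D' -> MD M t D'.
Proof. by move=> h <-. Qed.

Lemma MD_cst m n (A : 'M[C]_(m, n)) t : MD (fun _ => A) t 0.
Proof. by move=> i j; rewrite mxE; apply: CD_cst. Qed.

Lemma MD_mul m n p (A : R -> 'M[C]_(m, n)) (B : R -> 'M[C]_(n, p)) t DA DB :
  MD A t DA -> MD B t DB -> MD (fun s => A s *m B s) t (DA *m B t + A t *m DB).
Proof.
move=> hA hB i j.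
have -> : (fun s => (A s *m B s) i j) = (fun s => \sum_l A s i l * B s l j).
  by apply/funext=> s; rewrite mxE.
apply: CD_eq; first by apply: CD_sum => l; apply: CD_mul.
rewrite !mxE big_split /= addrC; congr (_ + _); apply: eq_bigr => l _.
Qed.

Lemma MD_adj m n (M : R -> 'M[C]_(m, n)) t D : MD M t D ->
  MD (fun s => adj (M s)) t (adj D).
Proof.
move=> h i j.
have -> : (fun s => adj (M s) i j) = (fun s => conjc (M s j i)).
  by apply/funext=> s; rewrite !mxE.
by rewrite !mxE; apply: CD_conj.
Qed.

Lemma MD_sum m n p (F : 'I_p -> R -> 'M[C]_(m, n)) t D :
  (forall k, MD (F k) t (D k)) -> MD (fun s => \sum_k F k s) t (\sum_k D k).
Proof.
move=> h i j.
have -> : (fun s => (\sum_k F k s) i j) = (fun s => \sum_k F k s i j).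
  by apply/funext=> s; rewrite summxE.
rewrite summxE. have := @CD_sum R p (fun k s => F k s i j) (fun k => D k i j) t (fun k => h k i j). exact.
Qed.

Lemma MD_of m n (M : R -> 'M[C]_(m, n)) t : mx_derivable M t -> MD M t (mx_deriv M t).
Proof.
move=> h i j; have [h1 h2] := h i j; rewrite mxE /=; split; rewrite /= derive1E;
exact: derivableP.
Qed.

Lemma MD_val m n (M : R -> 'M[C]_(m, n)) t D : MD M t D -> mx_deriv M t = D.
Proof.
move=> h; apply/matrixP=> i j; rewrite mxE; have [h1 h2] := h i j.
rewrite !derive1E (@derive_val _ _ _ _ _ _ _ h1) (@derive_val _ _ _ _ _ _ _ h2).
by case: (D i j).
Qed.
End MD.
Section Adj.
Variable R : rcfType.
Local Notation C := R[i].

Lemma adj_mul m n p (A : 'M[C]_(m, n)) (B : 'M[C]_(n, p)) :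
  adj (A *m B) = adj B *m adj A.
Proof. by rewrite /adj map_mxM trmx_mul. Qed.

Lemma adj_scale m n (c : C) (A : 'M[C]_(m, n)) : adj (c *: A) = conjc c *: adj A.
Proof. by apply/matrixP=> i j; rewrite !mxE rmorphM. Qed.

Lemma adjB m n (A B : 'M[C]_(m, n)) : adj (A - B) = adj A - adj B.
Proof. by apply/matrixP=> i j; rewrite !mxE rmorphB. Qed.

Lemma adj_sum m n p (F : 'I_p -> 'M[C]_(m, n)) : adj (\sum_k F k) = \sum_k adj (F k).
Proof. by apply/matrixP=> i j; rewrite !mxE !summxE rmorph_sum; apply: eq_bigr => k _; rewrite !mxE. Qed.

Lemma dotE d (u v : 'cV[C]_d) : \tr (adj u *m v) = \sum_i conjc (u i 0) * v i 0.
Proof. by rewrite /mxtrace big_ord1 !mxE; apply: eq_bigr => i _; rewrite !mxE. Qed.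

Lemma mulJ_ge0 (x : C) : 0 <= conjc x * x.
Proof. by rewrite mulrC; apply: mulcJ_ge0. Qed.

Lemma nrm_ge0 d (u : 'cV[C]_d) : 0 <= \tr (adj u *m u).
Proof. by rewrite dotE; apply: sumr_ge0 => i _; apply: mulJ_ge0. Qed.

Lemma nrm_eq0 d (u : 'cV[C]_d) : \tr (adj u *m u) = 0 -> u = 0.
Proof.
rewrite dotE => /eqP; rewrite psumr_eq0; last by move=> i _; apply: mulJ_ge0.
move=> /allP h; apply/matrixP=> i j; rewrite ord1 mxE.
have := h i (mem_index_enum _); rewrite mulf_eq0 conjc_eq0 => /orP[] /eqP //.
Qed.

Lemma conjc_ge0 (x : C) : 0 <= x -> conjc x = x.
Proof. by case: x => a b /ger0_Im /= ->; rewrite oppr0. Qed.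

Lemma expand2 d (u v : 'cV[C]_d) :
  \tr (adj (u - 2%:R *: v) *m (u - 2%:R *: v)) =
  \tr (adj u *m u) - 2%:R * (\tr (adj u *m v) + \tr (adj v *m u)) + 4%:R * \tr (adj v *m v).
Proof.
rewrite !dotE -big_split /= !mulr_sumr -sumrB -big_split /=.
apply: eq_bigr => i _; rewrite !mxE rmorphB rmorphM rmorph_nat. ring.
Qed.
End Adj.
Unset Implicit Arguments. Set Strict Implicit.

Theorem lemma1 (R : realType) (d n : nat)
  (E : 'I_n -> R -> 'M[R[i]]_d)          (* Kraus operators E_k(theta) *)
  (U : 'I_d -> R -> 'M[R[i]]_d)          (* canonical Kraus operators Upsilon_k(theta) *)
  (psi0 : 'cV[R[i]]_d)                   (* pure input state |psi0> *)
  (w : 'I_d -> R -> 'cV[R[i]]_d)         (* orthonormal basis |w_k(theta)> *)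
  (theta : R) (lam : 'M[R[i]]_d) :       (* parameter value, SLD lambda(theta) *)
  (forall k t, mx_derivable (E k) t) ->
  (forall t, \sum_k adj (E k t) *m E k t = 1%:M) ->
  (forall k t, mx_derivable (U k) t) ->
  (forall t, \sum_k adj (U k t) *m U k t = 1%:M) ->
  (forall t (rho : 'M[R[i]]_d),
      \sum_k U k t *m rho *m adj (U k t) = \sum_k E k t *m rho *m adj (E k t)) ->
  adj psi0 *m psi0 = 1%:M ->
  let rho0 := psi0 *m adj psi0 in
  let p k t := \tr (U k t *m rho0 *m adj (U k t)) in
  (forall t j k, \tr (U k t *m rho0 *m adj (U j t)) = (j == k)%:R * p k t) ->
  (forall k t, mx_derivable (w k) t) ->
  (forall t j k, adj (w j t) *m w k t = (j == k)%:R%:M) ->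
  (forall k t, 0 < p k t -> w k t = (sqrtC (p k t))^-1 *: (U k t *m psi0)) ->
  let rho_out t := \sum_k p k t *: (w k t *m adj (w k t)) in
  adj lam = lam ->
  mx_deriv rho_out theta = 2^-1 *: (rho_out theta *m lam + lam *m rho_out theta) ->
  \tr (rho_out theta *m lam *m lam)
    <= 4 * \sum_k \tr (mx_deriv (U k) theta *m rho0 *m adj (mx_deriv (U k) theta)).
Proof.
move=> _ _ hUd _ _ _ rho0 p horth _ _ hw rho_out hlam hSLD.
pose psi k t := U k t *m psi0.
pose phi k := mx_deriv (U k) theta *m psi0.
have hp : forall k t, p k t = \tr (adj (psi k t) *m psi k t).
  move=> k t; rewrite /p /rho0 mulmxA -[U k t *m psi0 *m _ *m _]mulmxA -adj_mul.
  by rewrite mxtrace_mulC.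
have hrho : forall t, rho_out t = \sum_k psi k t *m adj (psi k t).
  move=> t; rewrite /rho_out; apply: eq_bigr => k _.
  have [p0|pn0] := eqVneq (p k t) 0.
    have := p0; rewrite hp => /nrm_eq0 ->.
    by rewrite mulmx0 mul0mx mxtrace0 scale0r.
  have ppos : 0 < p k t by rewrite lt_def pn0 hp nrm_ge0.
  rewrite (hw k t ppos) adj_scale conjc_inv conjc_ge0 ?sqrtC_ge0 ?hp ?nrm_ge0 //.
  rewrite -scalemxAl -scalemxAr !scalerA.
  set q := \tr (adj (psi k t) *m psi k t).
  have sn0 : sqrtC q != 0 by rewrite sqrtC_eq0 /q -hp.
  have -> : q / sqrtC q / sqrtC q = 1.
    rewrite -{1}(sqrtCK q) expr2; field; done.
  by rewrite scale1r.
have Erho : rho_out = fun t => \sum_k psi k t *m adj (psi k t) by apply/funext.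
have hpsi : forall k, MD (psi k) theta (phi k).
  move=> k; apply: MD_eq; first exact: (MD_mul (MD_of (hUd k theta)) (MD_cst psi0 theta)).
  by rewrite mulmx0 addr0.
have hder : mx_deriv rho_out theta =
   \sum_k (phi k *m adj (psi k theta) + psi k theta *m adj (phi k)).
  rewrite Erho; apply: MD_val; apply: MD_sum => k.
  exact: (MD_mul (hpsi k) (MD_adj (hpsi k))).
pose a k := lam *m psi k theta.
have hC : forall k, \tr (mx_deriv (U k) theta *m rho0 *m adj (mx_deriv (U k) theta))
   = \tr (adj (phi k) *m phi k).
  move=> k; rewrite /rho0 mulmxA -[mx_deriv (U k) theta *m psi0 *m _ *m _]mulmxA -adj_mul.
  by rewrite mxtrace_mulC.
have key1 : forall v : 'cV_d, \tr (v *m adj v *m lam *m lam) = \tr (adj (lam *m v) *m (lam *m v)).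
  move=> v; rewrite adj_mul hlam -!mulmxA [LHS]mxtrace_mulC !mulmxA //.
have hX : \tr (rho_out theta *m lam *m lam) = \sum_k \tr (adj (a k) *m a k).
  rewrite hrho !mulmx_suml raddf_sum; apply: eq_bigr => k _; exact: key1.
have hL : \tr (lam *m rho_out theta *m lam) = \tr (rho_out theta *m lam *m lam).
  by have := mxtrace_mulC lam (rho_out theta *m lam); rewrite mulmxA.
have hS : \tr (mx_deriv rho_out theta *m lam) = \tr (rho_out theta *m lam *m lam).
  rewrite hSLD -scalemxAl mxtraceZ mulmxDl mxtraceD hL.
  by set x := \tr _; field.
have key2 : forall v f : 'cV_d, \tr ((f *m adj v + v *m adj f) *m lam) =
    \tr (adj (lam *m v) *m f) + \tr (adj f *m (lam *m v)).
  move=> v f; rewrite mulmxDl mxtraceD adj_mul hlam; congr (_ + _).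
    by rewrite -mulmxA [LHS]mxtrace_mulC.
  by rewrite -mulmxA [LHS]mxtrace_mulC !mulmxA.
have hS2 : \tr (mx_deriv rho_out theta *m lam) =
    \sum_k (\tr (adj (a k) *m phi k) + \tr (adj (phi k) *m a k)).
  rewrite hder mulmx_suml raddf_sum; apply: eq_bigr => k _; exact: key2.
have h0 : 0 <= \sum_k \tr (adj (a k - 2%:R *: phi k) *m (a k - 2%:R *: phi k)).
  by apply: sumr_ge0 => k _; apply: nrm_ge0.
rewrite (eq_bigr _ (fun k _ => expand2 (a k) (phi k))) in h0.
rewrite big_split sumrB /= -!mulr_sumr -hS2 hS hX in h0.
rewrite (eq_bigr _ (fun k _ => hC k)) hX -subr_ge0.
set X := \sum_k _ in h0 *.
set Y := \sum_k _ in h0 *.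
have -> : 4 * Y - X = X - 2%:R * X + 4%:R * Y by ring.
exact: h0.
Qed.
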